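(* Let $q\in\mathbb C$ with $|q|=1$, $q^2\neq1$, and let $A,B$ be self-adjoint operators on a Hilbert space $\mathcal H$. Fix $a,b\in\mathbb R$ with $ab\neq0$, and choose a square root $q^{1/2}$ of $q$, setting $\bar q^{1/2}:=\overline{q^{1/2}}$. Define the operator $T$ with domain $\mathcal D(T):=\mathcal D_q(A,B)$ by $$Tf=\bar q^{1/2}(A-aq^{1/2}I)(B-bq^{1/2}I)f+\tfrac{\bar q^{1/2}-q^{1/2}}{2}\,ab\,f .$$ If $T$ is essentially self-adjoint, then with $\lambda=a\bar q^{1/2}$ and $\mu=b\bar q^{1/2}$ (so that $\lambda,\lambda q\in\rho(A)$, $\mu,\mu q\in\rho(B)$) both identities $$R_\lambda(A)R_\mu(B)=qR_{\mu q}(B)R_{\lambda q}(A)+\mu\lambda q(q-1)R_{\mu q}(B)R_{\lambda q}(A)R_\lambda(A)R_\mu(B),$$ $$R_\lambda(A)R_\mu(B)=qR_{\mu q}(B)R_{\lambda q}(A)+\mu\lambda q(q-1)R_\lambda(A)R_\mu(B)R_{\mu q}(B)R_{\lambda q}(A)$$ hold on all of $\mathcal H$, and the bounded operator $R_{bq^{1/2}}(B)R_{aq^{1/2}}(A)$ is normal.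
   Context: $\rho(T)$ denotes the resolvent set and $R_\lambda(T)=(T-\lambda I)^{-1}$ the resolvent of a closed operator; products of unbounded operators have their natural domains; $\mathcal D_q(A,B):=\{f\in\mathcal D(BA)\cap\mathcal D(AB): ABf=qBAf\}$. (The operator $T$ is symmetric.) *)

(* Defs.v *)
From Stdlib Require Import Reals.
Open Scope R_scope.

Record Cx : Type := mkCx { cre : R ; cim : R }.

Definition RtoC (r : R) : Cx := mkCx r 0.
Definition Cadd (z w : Cx) : Cx := mkCx (cre z + cre w) (cim z + cim w).
Definition Copp (z : Cx) : Cx := mkCx (- cre z) (- cim z).
Definition Csub (z w : Cx) : Cx := Cadd z (Copp w).
Definition Cmul (z w : Cx) : Cx :=
  mkCx (cre z * cre w - cim z * cim w) (cre z * cim w + cim z * cre w).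
Definition Cconj (z : Cx) : Cx := mkCx (cre z) (- cim z).
Definition Cmod (z : Cx) : R := sqrt (cre z * cre z + cim z * cim z).
Definition Czero : Cx := RtoC 0.
Definition Cone : Cx := RtoC 1.

Record HilbertSpace : Type := {
  carrier :> Type;
  vzero : carrier;
  vadd : carrier -> carrier -> carrier;
  vopp : carrier -> carrier;
  vscal : Cx -> carrier -> carrier;
  inner : carrier -> carrier -> Cx;   (* linear in the first argument *)
  vaddA : forall x y z, vadd x (vadd y z) = vadd (vadd x y) z;
  vaddC : forall x y, vadd x y = vadd y x;
  vadd0 : forall x, vadd x vzero = x;
  vaddN : forall x, vadd x (vopp x) = vzero;
  vscal1 : forall x, vscal Cone x = x;
  vscalA : forall a b x, vscal a (vscal b x) = vscal (Cmul a b) x;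
  vscalDl : forall a b x, vscal (Cadd a b) x = vadd (vscal a x) (vscal b x);
  vscalDr : forall a x y, vscal a (vadd x y) = vadd (vscal a x) (vscal a y);
  inner_addl : forall x y z, inner (vadd x y) z = Cadd (inner x z) (inner y z);
  inner_scall : forall a x y, inner (vscal a x) y = Cmul a (inner x y);
  inner_conj : forall x y, inner y x = Cconj (inner x y);
  inner_pos : forall x, 0 <= cre (inner x x);
  inner_def : forall x, inner x x = Czero -> x = vzero;
  complete : forall u : nat -> carrier,
    (forall eps, 0 < eps -> exists N, forall n m, (N <= n)%nat -> (N <= m)%nat ->
        sqrt (cre (inner (vadd (u n) (vopp (u m))) (vadd (u n) (vopp (u m))))) < eps) ->
    exists l, forall eps, 0 < eps -> exists N, forall n, (N <= n)%nat ->
        sqrt (cre (inner (vadd (u n) (vopp l)) (vadd (u n) (vopp l)))) < eps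
}.

Arguments vzero {h}.
Arguments vadd {h}.
Arguments vopp {h}.
Arguments vscal {h}.
Arguments inner {h}.

Section Ops.
Context {H : HilbertSpace}.

Definition vsub (x y : H) : H := vadd x (vopp y).
Definition vnorm (x : H) : R := sqrt (cre (inner x x)).

Definition converges_to (u : nat -> H) (l : H) : Prop :=
  forall eps, 0 < eps -> exists N, forall n, (N <= n)%nat -> vnorm (vsub (u n) l) < eps.

Definition dense (S : H -> Prop) : Prop :=
  forall x eps, 0 < eps -> exists y, S y /\ vnorm (vsub x y) < eps.

(* A (possibly unbounded) operator: a domain and an action (only meaningful
   on the domain). *)
Record op : Type := mkOp { dom : H -> Prop ; app : H -> H }.

Definition graph_of (T : op) (f g : H) : Prop := dom T f /\ g = app T f.

(* Self-adjointness of an operator given by its graph G, i.e. G = G( T^* ):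
   single-valued, densely defined, symmetric, and D(T^* ) included in D(T). *)
Definition self_adjoint_graph (G : H -> H -> Prop) : Prop :=
  (forall f g1 g2, G f g1 -> G f g2 -> g1 = g2) /\
  dense (fun f => exists g, G f g) /\
  (forall f k g h, G f k -> G g h -> inner k g = inner f h) /\
  (forall g h, (forall f k, G f k -> inner k g = inner f h) -> G g h).

Definition self_adjoint (T : op) : Prop := self_adjoint_graph (graph_of T).

Definition closure_graph (T : op) (f g : H) : Prop :=
  exists u : nat -> H, (forall n, dom T (u n)) /\
    converges_to u f /\ converges_to (fun n => app T (u n)) g.

(* T is essentially self-adjoint: T is closable and its closure is self-adjoint *)
Definition ess_self_adjoint (T : op) : Prop := self_adjoint_graph (closure_graph T).

Definition bounded (R0 : H -> H) : Prop :=
  exists M, forall x, vnorm (R0 x) <= M * vnorm x.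

Definition is_resolvent (T : op) (lam : Cx) (R0 : H -> H) : Prop :=
  (forall x, dom T (R0 x) /\ vsub (app T (R0 x)) (vscal lam (R0 x)) = x) /\
  (forall f, dom T f -> R0 (vsub (app T f) (vscal lam f)) = f) /\
  bounded R0.

Definition in_resolvent_set (T : op) (lam : Cx) : Prop :=
  exists R0, is_resolvent T lam R0.

Definition is_adjoint_bdd (N Nadj : H -> H) : Prop :=
  forall x y, inner (N x) y = inner x (Nadj y).
Definition normal_bdd (N : H -> H) : Prop :=
  bounded N /\ exists Nadj, is_adjoint_bdd N Nadj /\ forall x, N (Nadj x) = Nadj (N x).

Definition Dq (q : Cx) (A B : op) (f : H) : Prop :=
  dom A f /\ dom B (app A f) /\ dom B f /\ dom A (app B f) /\
  app A (app B f) = vscal q (app B (app A f)).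

(* T f = qbar^{1/2} (A - a q^{1/2} I)(B - b q^{1/2} I) f
         + ((qbar^{1/2} - q^{1/2})/2) a b f,   D(T) = D_q(A,B),
   where s = q^{1/2} *)
Definition T_op (q s : Cx) (a b : R) (A B : op) : op :=
  mkOp (Dq q A B)
    (fun f =>
       let g := vsub (app B f) (vscal (Cmul (RtoC b) s) f) in
       vadd (vscal (Cconj s) (vsub (app A g) (vscal (Cmul (RtoC a) s) g)))
            (vscal (Cmul (Cmul (RtoC (/2)) (Csub (Cconj s) s)) (RtoC (a * b))) f)).

End Ops.
Arguments op : clear implicits.

(* Main.v *)
Require Import Defs.
From Stdlib Require Import Reals.
Open Scope R_scope.
From Stdlib Require Import Lra Lia Psatz Field.
From Stdlib Require List.
From Stdlib Require Import ClassicalEpsilon Classical.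


Lemma Cx_eq : forall z w : Cx, cre z = cre w -> cim z = cim w -> z = w.
Proof. intros [a b] [c d]; simpl; intros -> ->; reflexivity. Qed.

Arguments vaddA {h}. Arguments vaddC {h}. Arguments vadd0 {h}. Arguments vaddN {h}.
Arguments vscal1 {h}. Arguments vscalA {h}. Arguments vscalDl {h}. Arguments vscalDr {h}.
Arguments inner_addl {h}. Arguments inner_scall {h}. Arguments inner_conj {h}. Arguments inner_pos {h}.
Arguments inner_def {h}. Arguments complete {h}.

Ltac ceq := apply Cx_eq; simpl; try ring.

Inductive vexp := VAtom (n : nat) | VZero | VAdd (e1 e2 : vexp) | VOpp (e : vexp)
 | VScal (c : Cx) (e : vexp).

Fixpoint coef (e : vexp) : nat -> Cx :=
  match e with
  | VAtom n => fun i => if Nat.eqb i n then Cone else Czero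
  | VZero => fun _ => Czero
  | VAdd e1 e2 => fun i => Cadd (coef e1 i) (coef e2 i)
  | VOpp e => fun i => Copp (coef e i)
  | VScal c e => fun i => Cmul c (coef e i)
  end.

Fixpoint wfb (N : nat) (e : vexp) : bool :=
  match e with
  | VAtom n => Nat.ltb n N
  | VZero => true
  | VAdd e1 e2 => andb (wfb N e1) (wfb N e2)
  | VOpp e => wfb N e
  | VScal _ e => wfb N e
  end.

Section V.
Context {H : HilbertSpace}.
Implicit Types x y z : H.

Lemma vadd0l x : vadd vzero x = x.
Proof. rewrite vaddC; apply vadd0. Qed.

Lemma vadd_cancel x y z : vadd x y = vadd x z -> y = z.
Proof.
  intro E. assert (E2 : vadd (vopp x) (vadd x y) = vadd (vopp x) (vadd x z)) by now rewrite E.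
  rewrite !vaddA, (vaddC (vopp x) x), vaddN, !vadd0l in E2. exact E2.
Qed.

Lemma vscal0 x : vscal Czero x = vzero.
Proof.
  apply (vadd_cancel (vscal Czero x)). rewrite vadd0, <- vscalDl.
  f_equal. ceq.
Qed.

Lemma vscal_zero a : vscal a (@vzero H) = vzero.
Proof.
  apply (vadd_cancel (vscal a vzero)). rewrite vadd0, <- vscalDr, vadd0. reflexivity.
Qed.

Lemma vopp_scal x : vopp x = vscal (Copp Cone) x.
Proof.
  apply (vadd_cancel x). rewrite vaddN.
  rewrite <- (vscal1 x) at 1. rewrite <- vscalDl.
  rewrite <- (vscal0 x). f_equal. ceq.
Qed.

Fixpoint den (l : list H) (e : vexp) : H :=
  match e with
  | VAtom n => List.nth n l vzero
  | VZero => vzero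
  | VAdd e1 e2 => vadd (den l e1) (den l e2)
  | VOpp e => vopp (den l e)
  | VScal c e => vscal c (den l e)
  end.

Fixpoint lin (l : list H) (f : nat -> Cx) (N : nat) : H :=
  match N with
  | O => vzero
  | S N => vadd (lin l f N) (vscal (f N) (List.nth N l vzero))
  end.

Lemma vadd_swap4 (a b c d : H) : vadd (vadd a b) (vadd c d) = vadd (vadd a c) (vadd b d).
Proof.
  rewrite <- !vaddA. f_equal. rewrite !vaddA. f_equal. apply vaddC.
Qed.

Lemma lin_ext l f g N : (forall i, (i < N)%nat -> f i = g i) -> lin l f N = lin l g N.
Proof.
  induction N; simpl; intros Hfg; [reflexivity|].
  rewrite IHN by (intros; apply Hfg; lia). rewrite Hfg by lia. reflexivity.
Qed.

Lemma lin_add l f g N : lin l (fun i => Cadd (f i) (g i)) N = vadd (lin l f N) (lin l g N).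
Proof.
  induction N; simpl. now rewrite vadd0.
  rewrite IHN, vscalDl. apply vadd_swap4.
Qed.

Lemma lin_scal l c f N : lin l (fun i => Cmul c (f i)) N = vscal c (lin l f N).
Proof.
  induction N; simpl. now rewrite vscal_zero.
  rewrite IHN, vscalDr, vscalA. reflexivity.
Qed.

Lemma lin_zero l N : lin l (fun _ => Czero) N = vzero.
Proof. induction N; simpl; [reflexivity|]. rewrite IHN, vscal0, vadd0. reflexivity. Qed.

Lemma lin_opp l f N : lin l (fun i => Copp (f i)) N = vopp (lin l f N).
Proof.
  rewrite vopp_scal, <- lin_scal. apply lin_ext. intros; ceq.
Qed.

Lemma lin_atom l n N : (n < N)%nat ->
  lin l (fun i => if Nat.eqb i n then Cone else Czero) N = List.nth n l vzero.
Proof.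
  induction N; intros Hn; [lia|]. simpl.
  destruct (Nat.eq_dec n N) as [->|Hne].
  - rewrite Nat.eqb_refl, vscal1. rewrite (lin_ext _ _ (fun _ => Czero)).
    + rewrite lin_zero. apply vadd0l.
    + intros i Hi. destruct (Nat.eqb_spec i N); [lia|reflexivity].
  - rewrite IHN by lia. destruct (Nat.eqb_spec N n); [lia|]. rewrite vscal0, vadd0. reflexivity.
Qed.

Lemma den_lin l e N : wfb N e = true -> den l e = lin l (coef e) N.
Proof.
  induction e; simpl; intros W.
  - rewrite lin_atom; [reflexivity|]. apply Nat.ltb_lt; exact W.
  - symmetry; apply lin_zero.
  - apply andb_prop in W as [W1 W2]. rewrite lin_add, IHe1, IHe2 by assumption. reflexivity.
  - rewrite lin_opp, IHe by assumption. reflexivity.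
  - rewrite lin_scal, IHe by assumption. reflexivity.
Qed.

Lemma den_eq l e1 e2 : wfb (length l) e1 = true -> wfb (length l) e2 = true ->
  (forall i, (i < length l)%nat -> coef e1 i = coef e2 i) -> den l e1 = den l e2.
Proof.
  intros W1 W2 C. rewrite (den_lin l e1 (length l)), (den_lin l e2 (length l)) by assumption.
  apply lin_ext. exact C.
Qed.

End V.

Ltac addat t l := match l with context [cons t _] => l | _ => constr:(cons t l) end.
Ltac atoms t l := match t with
 | vadd ?x ?y => let l1 := atoms x l in atoms y l1
 | vsub ?x ?y => let l1 := atoms x l in atoms y l1
 | vopp ?x => atoms x l
 | vscal _ ?x => atoms x l
 | vzero => l
 | _ => addat t l end.
Ltac idx t l := match l with cons t _ => constr:(O) | cons _ ?l' => let n := idx t l' in constr:(S n) end.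
Ltac reify t l := match t with
 | vadd ?x ?y => let a := reify x l in let b := reify y l in constr:(VAdd a b)
 | vsub ?x ?y => let a := reify x l in let b := reify y l in constr:(VAdd a (VOpp b))
 | vopp ?x => let a := reify x l in constr:(VOpp a)
 | vscal ?c ?x => let a := reify x l in constr:(VScal c a)
 | vzero => constr:(VZero)
 | _ => let n := idx t l in constr:(VAtom n) end.
Ltac vring := match goal with |- ?x = ?y =>
  let T := type of x in
  let l0 := atoms x (@nil T) in let l := atoms y l0 in
  let e1 := reify x l in let e2 := reify y l in
  change (den l e1 = den l e2); apply den_eq; [reflexivity | reflexivity |
  let i := fresh "i" in let Hi := fresh "Hi" in
  intros i Hi; simpl in Hi; repeat (destruct i as [|i]; [ | try (exfalso; lia)]);
  apply Cx_eq; simpl; try ring ] end.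




Section I.
Context {H : HilbertSpace}.
Implicit Types x y z k d : H.

Lemma inner_addr x y z : inner x (vadd y z) = Cadd (inner x y) (inner x z).
Proof.
  rewrite (inner_conj (vadd y z) x), inner_addl, (inner_conj x y), (inner_conj x z). ceq.
Qed.

Lemma inner_scalr a x y : inner x (vscal a y) = Cmul (Cconj a) (inner x y).
Proof.
  rewrite (inner_conj (vscal a y) x), inner_scall, (inner_conj x y). ceq.
Qed.

Lemma inner_zl y : inner (@vzero H) y = Czero.
Proof. rewrite <- (vscal0 (@vzero H)), inner_scall. ceq. Qed.

Lemma inner_zr y : inner y (@vzero H) = Czero.
Proof. rewrite <- (vscal0 (@vzero H)), inner_scalr. ceq. Qed.

Lemma inner_oppl x y : inner (vopp x) y = Copp (inner x y).
Proof. rewrite vopp_scal, inner_scall. ceq. Qed.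

Lemma inner_oppr x y : inner x (vopp y) = Copp (inner x y).
Proof. rewrite vopp_scal, inner_scalr. ceq. Qed.

Lemma inner_self_im x : cim (inner x x) = 0.
Proof. pose proof (f_equal cim (inner_conj x x)) as E. simpl in E. lra. Qed.

Definition ns x := cre (inner x x).

Lemma ns_pos x : 0 <= ns x.
Proof. apply inner_pos. Qed.

Lemma ns_zero x : ns x = 0 -> x = vzero.
Proof.
  intro E. apply inner_def. apply Cx_eq; [exact E| apply inner_self_im].
Qed.

Lemma ns_vzero : ns (@vzero H) = 0.
Proof. unfold ns. rewrite inner_zl. reflexivity. Qed.

Lemma re_inner_sym x y : cre (inner y x) = cre (inner x y).
Proof. rewrite (inner_conj x y). reflexivity. Qed.

Lemma ns_add x y : ns (vadd x y) = ns x + ns y + 2 * cre (inner x y).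
Proof.
  unfold ns. rewrite inner_addl, !inner_addr. simpl. rewrite (re_inner_sym x y). ring.
Qed.

Lemma re_inner_scalr a x y : cre (inner x (vscal a y)) = cre a * cre (inner x y) + cim a * cim (inner x y).
Proof. rewrite inner_scalr. simpl. ring. Qed.

Lemma re_inner_scall a x y : cre (inner (vscal a x) y) = cre a * cre (inner x y) - cim a * cim (inner x y).
Proof. rewrite inner_scall. simpl. ring. Qed.

Lemma ns_scal a x : ns (vscal a x) = (cre a * cre a + cim a * cim a) * ns x.
Proof.
  unfold ns. rewrite inner_scall, inner_scalr. simpl. rewrite inner_self_im. ring.
Qed.

Lemma ns_opp x : ns (vopp x) = ns x.
Proof. rewrite vopp_scal, ns_scal. simpl. ring. Qed.

Lemma ns_sub x y : ns (vsub x y) = ns x + ns y - 2 * cre (inner x y).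
Proof.
  unfold vsub. rewrite ns_add, ns_opp, inner_oppr. simpl. ring.
Qed.

Lemma ns_add_le x y : ns (vadd x y) <= 2 * ns x + 2 * ns y.
Proof.
  pose proof (ns_sub x y). pose proof (ns_add x y). pose proof (ns_pos (vsub x y)). lra.
Qed.

Lemma sqrt_le_bound u v : 0 <= v -> u <= v * v -> sqrt u <= v.
Proof.
  intros Hv Hu. destruct (Rle_lt_dec 0 u).
  - rewrite <- (sqrt_square v) by exact Hv. apply sqrt_le_1; nra.
  - rewrite sqrt_neg_0 by lra. exact Hv.
Qed.

Lemma vnorm_pos x : 0 <= vnorm x.
Proof. apply sqrt_pos. Qed.

Lemma vnorm_sq x : vnorm x * vnorm x = ns x.
Proof. apply sqrt_sqrt, ns_pos. Qed.

Lemma vnorm_add_le x y : vnorm (vadd x y) <= 2 * (vnorm x + vnorm y).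
Proof.
  unfold vnorm at 1. apply sqrt_le_bound.
  - pose proof (vnorm_pos x); pose proof (vnorm_pos y); lra.
  - pose proof (ns_add_le x y). pose proof (vnorm_sq x). pose proof (vnorm_sq y).
    pose proof (vnorm_pos x); pose proof (vnorm_pos y). change (ns (vadd x y) <= 2 * (vnorm x + vnorm y) * (2 * (vnorm x + vnorm y))). nra.
Qed.

Lemma vnorm_scal a x : vnorm (vscal a x) = Cmod a * vnorm x.
Proof.
  unfold vnorm, Cmod. fold (ns (vscal a x)). rewrite ns_scal, sqrt_mult; [reflexivity| |apply ns_pos].
  nra.
Qed.

Lemma vnorm_zero x : vnorm x = 0 -> x = vzero.
Proof. intro E. apply ns_zero. rewrite <- vnorm_sq, E. ring. Qed.

Lemma vnorm_vzero : vnorm (@vzero H) = 0.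
Proof. unfold vnorm. fold (ns (@vzero H)). rewrite ns_vzero. apply sqrt_0. Qed.

Lemma vnorm_opp x : vnorm (vopp x) = vnorm x.
Proof. unfold vnorm. fold (ns (vopp x)) (ns x). rewrite ns_opp. reflexivity. Qed.

Lemma quad_zero r c : 0 <= c -> (forall t, 2 * t * r <= t * t * c) -> r = 0.
Proof.
  intros Hc Ht. destruct (Req_dec r 0) as [|Hr]; [assumption|exfalso].
  specialize (Ht (r / (c + 1))).
  assert (E : 2 * (r / (c + 1)) * r = 2 * (r * r) / (c+1)) by (field; lra).
  assert (E2 : r / (c + 1) * (r / (c + 1)) * c = (r*r) * c / ((c+1)*(c+1))) by (field; lra).
  rewrite E, E2 in Ht.
  assert (0 < r * r) by nra.
  apply Rmult_le_compat_r with (r := (c+1)*(c+1)) in Ht; [|nra].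
  unfold Rdiv in Ht.
  replace (2 * (r * r) * / (c + 1) * ((c + 1) * (c + 1))) with (2 * (r*r) * (c+1)) in Ht by (field; lra).
  replace (r * r * c * / ((c + 1) * (c + 1)) * ((c + 1) * (c + 1))) with (r*r*c) in Ht by (field; lra).
  nra.
Qed.

Lemma re_inner_bound k d : Rabs (cre (inner k d)) <= vnorm d * (ns k + 1).
Proof.
  assert (Key : forall t, 2 * t * cre (inner k d) <= t * t * ns k + ns d).
  { intro t. pose proof (ns_sub (vscal (RtoC t) k) d) as E. pose proof (ns_pos (vsub (vscal (RtoC t) k) d)).
    rewrite ns_scal, re_inner_scall in E. simpl in E. nra. }
  pose proof (vnorm_pos d) as Hn. pose proof (vnorm_sq d) as Hs. pose proof (ns_pos k).
  destruct (Req_dec (vnorm d) 0) as [E0|Hn0].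
  - assert (r0 : cre (inner k d) = 0).
    { apply (quad_zero _ (ns k)); [assumption|]. intro t. specialize (Key t). rewrite <- Hs, E0 in Key. lra. }
    rewrite r0, Rabs_R0. nra.
  - pose proof (Key (vnorm d)). pose proof (Key (- vnorm d)). rewrite <- Hs in *.
    apply Rabs_le. split; nra.
Qed.

Lemma im_inner_bound k d : Rabs (cim (inner k d)) <= vnorm d * (ns k + 1).
Proof.
  pose proof (re_inner_bound k (vscal (mkCx 0 1) d)) as B.
  rewrite re_inner_scalr, vnorm_scal in B. simpl in B.
  replace (Cmod (mkCx 0 1)) with 1 in B.
  - replace (0 * cre (inner k d) + 1 * cim (inner k d)) with (cim (inner k d)) in B by ring. lra.
  - unfold Cmod. simpl. replace (0*0+1*1) with 1 by ring. symmetry; apply sqrt_1.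
Qed.

End I.


Section C.
Context {H : HilbertSpace}.
Implicit Types x y z k d l m f g h : H.

Definition rconv (r : nat -> R) (L : R) :=
  forall eps, 0 < eps -> exists N, forall n, (N <= n)%nat -> Rabs (r n - L) < eps.



Lemma rconv_unique r L1 L2 : rconv r L1 -> rconv r L2 -> L1 = L2.
Proof.
  intros C1 C2. destruct (Req_dec L1 L2) as [|Hne]; [assumption|exfalso].
  assert (Hp : 0 < Rabs (L1 - L2) / 2).
  { apply Rdiv_lt_0_compat; [apply Rabs_pos_lt; lra|lra]. }
  destruct (C1 _ Hp) as [N1 H1]. destruct (C2 _ Hp) as [N2 H2].
  specialize (H1 (N1 + N2)%nat ltac:(lia)). specialize (H2 (N1 + N2)%nat ltac:(lia)).
  set (w := r (N1 + N2)%nat) in *.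
  assert (Rabs (L1 - L2) <= Rabs (w - L2) + Rabs (w - L1)).
  { replace (L1 - L2) with ((w - L2) - (w - L1)) by ring. apply Rabs_triang_inv2 || 
    (eapply Rle_trans; [apply Rabs_triang|]; rewrite Rabs_Ropp; lra). }
  lra.
Qed.

Lemma conv_ext (u v : nat -> H) l : (forall n, u n = v n) -> converges_to u l -> converges_to v l.
Proof. intros E C eps He. destruct (C eps He) as [N HN]. exists N; intros n Hn. rewrite <- E. auto. Qed.

Lemma conv_const l : converges_to (fun _ : nat => l) l.
Proof.
  intros eps He. exists O. intros n _. replace (vsub l l) with (@vzero H) by (symmetry; vring).
  rewrite vnorm_vzero. exact He.
Qed.

Lemma conv_add (u v : nat -> H) l m : converges_to u l -> converges_to v m ->
  converges_to (fun n => vadd (u n) (v n)) (vadd l m).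
Proof.
  intros Cu Cv eps He. destruct (Cu (eps/4)) as [N1 H1]; [lra|]. destruct (Cv (eps/4)) as [N2 H2]; [lra|].
  exists (N1 + N2)%nat. intros n Hn.
  replace (vsub (vadd (u n) (v n)) (vadd l m)) with (vadd (vsub (u n) l) (vsub (v n) m)) by vring.
  eapply Rle_lt_trans; [apply vnorm_add_le|].
  specialize (H1 n ltac:(lia)). specialize (H2 n ltac:(lia)). lra.
Qed.

Lemma Cmod_pos c : 0 <= Cmod c.
Proof. apply sqrt_pos. Qed.

Lemma conv_scal c (u : nat -> H) l : converges_to u l ->
  converges_to (fun n => vscal c (u n)) (vscal c l).
Proof.
  intros Cu eps He. pose proof (Cmod_pos c).
  destruct (Cu (eps / (Cmod c + 1))) as [N HN]; [apply Rdiv_lt_0_compat; lra|].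
  exists N. intros n Hn.
  replace (vsub (vscal c (u n)) (vscal c l)) with (vscal c (vsub (u n) l)) by vring.
  rewrite vnorm_scal. specialize (HN n Hn). pose proof (vnorm_pos (vsub (u n) l)).
  apply Rmult_lt_compat_l with (r := Cmod c + 1) in HN; [|lra].
  replace ((Cmod c + 1) * (eps / (Cmod c + 1))) with eps in HN by (field; lra). nra.
Qed.

Lemma conv_unique (u : nat -> H) l m : converges_to u l -> converges_to u m -> l = m.
Proof.
  intros Cl Cm. assert (Hz : vnorm (vsub l m) = 0).
  { apply Rle_antisym; [|apply vnorm_pos]. apply Rnot_lt_le. intro Hp.
    destruct (Cl (vnorm (vsub l m) / 8)) as [N1 H1]; [lra|].
    destruct (Cm (vnorm (vsub l m) / 8)) as [N2 H2]; [lra|].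
    specialize (H1 (N1+N2)%nat ltac:(lia)). specialize (H2 (N1+N2)%nat ltac:(lia)).
    set (w := u (N1+N2)%nat) in *.
    assert (E : vsub l m = vadd (vopp (vsub w l)) (vsub w m)) by vring.
    pose proof (vnorm_add_le (vopp (vsub w l)) (vsub w m)) as Tr. rewrite vnorm_opp, <- E in Tr. lra. }
  apply vnorm_zero in Hz. rewrite <- (vadd0 m), <- Hz. vring.
Qed.

Lemma conv_inner_r k (u : nat -> H) l : converges_to u l ->
  rconv (fun n => cre (inner k (u n))) (cre (inner k l)) /\
  rconv (fun n => cim (inner k (u n))) (cim (inner k l)).
Proof.
  intro C. pose proof (ns_pos k).
  assert (D : forall n, inner k (u n) = Cadd (inner k l) (inner k (vsub (u n) l))).
  { intro n. unfold vsub. rewrite inner_addr, inner_oppr. ceq. }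
  split; intros eps He; destruct (C (eps / (ns k + 1))) as [N HN]; try (apply Rdiv_lt_0_compat; lra);
    exists N; intros n Hn; rewrite D; simpl; specialize (HN n Hn);
    apply Rmult_lt_compat_r with (r := ns k + 1) in HN; try lra;
    replace (eps / (ns k + 1) * (ns k + 1)) with eps in HN by (field; lra).
  - replace (cre (inner k l) + cre (inner k (vsub (u n) l)) - cre (inner k l)) with (cre (inner k (vsub (u n) l))) by ring.
    pose proof (re_inner_bound k (vsub (u n) l)). lra.
  - replace (cim (inner k l) + cim (inner k (vsub (u n) l)) - cim (inner k l)) with (cim (inner k (vsub (u n) l))) by ring.
    pose proof (im_inner_bound k (vsub (u n) l)). lra.
Qed.

Lemma conv_inner_eq k k' (u v : nat -> H) l m : converges_to u l -> converges_to v m ->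
  (forall n, inner k (u n) = inner k' (v n)) -> inner k l = inner k' m.
Proof.
  intros Cu Cv E. destruct (conv_inner_r k u l Cu) as [R1 I1]. destruct (conv_inner_r k' v m Cv) as [R2 I2].
  apply Cx_eq.
  - apply (rconv_unique (fun n => cre (inner k (u n)))); [exact R1|]. intros eps He. destruct (R2 eps He) as [N HN].
    exists N; intros n Hn. rewrite E. auto.
  - apply (rconv_unique (fun n => cim (inner k (u n)))); [exact I1|]. intros eps He. destruct (I2 eps He) as [N HN].
    exists N; intros n Hn. rewrite E. auto.
Qed.

Variable G : H -> H -> Prop.
Hypothesis HG : self_adjoint_graph G.

Lemma G_fun f g1 g2 : G f g1 -> G f g2 -> g1 = g2.
Proof. destruct HG as [F _]. apply F. Qed.

Lemma G_sym f k g h : G f k -> G g h -> inner k g = inner f h.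
Proof. destruct HG as [_ [_ [S _]]]. apply S. Qed.

Lemma G_max g h : (forall f k, G f k -> inner k g = inner f h) -> G g h.
Proof. destruct HG as [_ [_ [_ M]]]. apply M. Qed.

Lemma G_zero : G vzero vzero.
Proof. apply G_max. intros. rewrite inner_zr, inner_zr. reflexivity. Qed.

Lemma G_add f1 g1 f2 g2 : G f1 g1 -> G f2 g2 -> G (vadd f1 f2) (vadd g1 g2).
Proof.
  intros G1 G2. apply G_max. intros f k Gk. rewrite !inner_addr.
  rewrite (G_sym _ _ _ _ Gk G1), (G_sym _ _ _ _ Gk G2). reflexivity.
Qed.

Lemma G_scal a f g : G f g -> G (vscal a f) (vscal a g).
Proof.
  intros G1. apply G_max. intros f' k Gk. rewrite !inner_scalr.
  rewrite (G_sym _ _ _ _ Gk G1). reflexivity.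
Qed.

Lemma G_closed (u v : nat -> H) f g : (forall n, G (u n) (v n)) ->
  converges_to u f -> converges_to v g -> G f g.
Proof.
  intros Gn Cu Cv. apply G_max. intros f' k Gk.
  apply (conv_inner_eq k f' u v); auto. intro n. apply (G_sym _ _ _ _ Gk (Gn n)).
Qed.

Lemma G_lower (z : Cx) f g : G f g -> cim z * cim z * ns f <= ns (vsub g (vscal z f)).
Proof.
  intro Gf. pose proof (G_sym _ _ _ _ Gf Gf) as S.
  assert (Im0 : cim (inner g f) = 0).
  { pose proof (f_equal cim (inner_conj g f)) as E. rewrite <- S in E. simpl in E. lra. }
  rewrite ns_sub, ns_scal, re_inner_scalr, Im0.
  pose proof (ns_pos (vsub g (vscal (RtoC (cre z)) f))) as P.
  rewrite ns_sub, ns_scal, re_inner_scalr in P. simpl in P. nra.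
Qed.

End C.


Lemma sqrt_lt_bound u e : 0 < e -> u < e * e -> sqrt u < e.
Proof.
  intros He Hu. destruct (Rle_lt_dec 0 u).
  - rewrite <- (sqrt_square e) by lra. apply sqrt_lt_1_alt; lra.
  - rewrite sqrt_neg_0 by lra. exact He.
Qed.

Lemma small_inv e : 0 < e -> exists N, / (INR N + 1) < e.
Proof.
  intro He. destruct (archimed_cor1 e He) as [N [HN HN0]]. exists N.
  eapply Rle_lt_trans; [|exact HN]. apply Rinv_le_contravar; [apply lt_0_INR; lia|lra].
Qed.

Lemma inv_le_N N n : (N <= n)%nat -> / (INR n + 1) <= / (INR N + 1).
Proof.
  intro Hn. apply Rinv_le_contravar; [pose proof (pos_INR N); lra|]. apply le_INR in Hn. lra.
Qed.

Lemma inv_pos n : 0 < / (INR n + 1).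
Proof. apply Rinv_0_lt_compat. pose proof (pos_INR n); lra. Qed.

Lemma sq_le_le a b : 0 <= a -> 0 <= b -> a * a <= b * b -> a <= b.
Proof. intros. nra. Qed.

Section R.
Context {H : HilbertSpace}.
Implicit Types x y k d l f g h w : H.

Lemma cauchy_bound (u : nat -> H) (K : R) : 0 <= K ->
  (forall n m, ns (vsub (u n) (u m)) <= K * (/ (INR n + 1) + / (INR m + 1))) ->
  exists l, converges_to u l.
Proof.
  intros HK B. destruct (complete u) as [l Hl].
  - intros eps He. destruct (small_inv (eps * eps / (2 * K + 1))) as [N HN].
    { apply Rdiv_lt_0_compat; nra. }
    exists N. intros n m Hn Hm. apply sqrt_lt_bound; [exact He|].
    fold (vsub (u n) (u m)). fold (ns (vsub (u n) (u m))).
    eapply Rle_lt_trans; [apply B|].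
    pose proof (inv_le_N N n Hn). pose proof (inv_le_N N m Hm). pose proof (inv_pos n). pose proof (inv_pos m).
    pose proof (inv_pos N).
    apply Rmult_lt_compat_r with (r := 2 * K + 1) in HN; [|lra].
    replace (eps * eps / (2 * K + 1) * (2 * K + 1)) with (eps * eps) in HN by (field; lra).
    nra.
  - exists l. exact Hl.
Qed.

Variable G : H -> H -> Prop.
Hypothesis HG : self_adjoint_graph G.

Lemma G_lin a f1 g1 f2 g2 : G f1 g1 -> G f2 g2 -> G (vadd f1 (vscal a f2)) (vadd g1 (vscal a g2)).
Proof. intros. apply G_add; auto. apply G_scal; auto. Qed.

Lemma G_surj (z : Cx) (Hz : cim z <> 0) x : exists f g, G f g /\ vsub g (vscal z f) = x.
Proof.
  assert (Hz2 : 0 < cim z * cim z) by (apply Rsqr_pos_lt; exact Hz).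
  set (M := fun y => exists f g, G f g /\ y = vsub g (vscal z f)).
  assert (M0 : M vzero). { exists vzero, vzero. split; [apply G_zero; auto|vring]. }
  assert (Mlin : forall a y1 y2, M y1 -> M y2 -> M (vadd y1 (vscal a y2))).
  { intros a y1 y2 [f1 [g1 [G1 ->]]] [f2 [g2 [G2 ->]]].
    exists (vadd f1 (vscal a f2)), (vadd g1 (vscal a g2)). split; [apply G_lin; auto| vring]. }
  set (E := fun r => exists y, M y /\ r = - ns (vsub x y)).
  destruct (completeness E) as [L [LUb LLeast]].
  { exists 0. intros r [y [_ ->]]. pose proof (ns_pos (vsub x y)). lra. }
  { exists (- ns (vsub x vzero)). exists vzero. split; auto. }
  set (d := - L).
  assert (dlow : forall y, M y -> d <= ns (vsub x y)).
  { intros y My. assert (E (- ns (vsub x y))) by (exists y; auto). apply LUb in H0. unfold d. lra. }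
  assert (d0 : 0 <= d).
  { assert (L <= 0). { apply LLeast. intros r [y [_ ->]]. pose proof (ns_pos (vsub x y)). lra. } unfold d; lra. }
  assert (dapp : forall eps, 0 < eps -> exists p : H * H, G (fst p) (snd p) /\
            ns (vsub x (vsub (snd p) (vscal z (fst p)))) < d + eps).
  { intros eps He. apply NNPP. intro Hn.
    assert (L <= L - eps).
    { apply LLeast. intros r [y [[f [g [Gfg ->]]] ->]]. apply Rnot_lt_le. intro Hlt.
      apply Hn. exists (f, g). simpl. split; auto. unfold d. lra. }
    lra. }
  set (P := fun n => proj1_sig (constructive_indefinite_description _ (dapp _ (inv_pos n)))).
  assert (HP : forall n, G (fst (P n)) (snd (P n)) /\
            ns (vsub x (vsub (snd (P n)) (vscal z (fst (P n))))) < d + / (INR n + 1)).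
  { intro n. exact (proj2_sig (constructive_indefinite_description _ (dapp _ (inv_pos n)))). }
  set (fs := fun n => fst (P n)). set (gs := fun n => snd (P n)).
  set (ys := fun n => vsub (gs n) (vscal z (fs n))).
  assert (Mys : forall n, M (ys n)). { intro n. exists (fs n), (gs n). split; [apply HP|reflexivity]. }
  assert (Bys : forall n, ns (vsub x (ys n)) < d + / (INR n + 1)) by (intro n; apply HP).
  assert (Cy : forall n m, ns (vsub (ys n) (ys m)) <= 2 * (/ (INR n + 1) + / (INR m + 1))).
  { intros n m.
    set (w := vscal (RtoC (/2)) (vadd (ys n) (ys m))).
    assert (Mw : M w).
    { unfold w. replace (vscal (RtoC (/ 2)) (vadd (ys n) (ys m))) with
        (vadd (vscal (RtoC (/2)) (ys n)) (vscal (RtoC (/2)) (ys m))) by vring.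
      replace (vscal (RtoC (/2)) (ys n)) with (vadd vzero (vscal (RtoC (/2)) (ys n))) by vring.
      apply Mlin; auto. }
    pose proof (dlow w Mw).
    pose proof (ns_add (vsub x (ys n)) (vsub x (ys m))) as A1.
    pose proof (ns_sub (vsub x (ys n)) (vsub x (ys m))) as A2.
    assert (E1 : vadd (vsub x (ys n)) (vsub x (ys m)) = vscal (RtoC 2) (vsub x w)).
    { unfold w. vring; field. }
    assert (E2 : vsub (vsub x (ys n)) (vsub x (ys m)) = vopp (vsub (ys n) (ys m))) by vring.
    rewrite E1, ns_scal in A1. rewrite E2, ns_opp in A2. simpl in A1.
    pose proof (Bys n). pose proof (Bys m). lra. }
  assert (Cf : forall n m, ns (vsub (fs n) (fs m)) <=
             (2 / (cim z * cim z)) * (/ (INR n + 1) + / (INR m + 1))).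
  { intros n m. assert (Gd : G (vsub (fs n) (fs m)) (vsub (gs n) (gs m))).
    { unfold vsub. rewrite !vopp_scal. apply G_lin; apply HP. }
    pose proof (G_lower G HG z _ _ Gd) as Lo.
    replace (vsub (vsub (gs n) (gs m)) (vscal z (vsub (fs n) (fs m)))) with (vsub (ys n) (ys m)) in Lo by (unfold ys; vring).
    pose proof (Cy n m). assert (0 < cim z * cim z) by (apply Rsqr_pos_lt; exact Hz).
    apply Rmult_le_reg_l with (r := cim z * cim z); [lra|].
    replace (cim z * cim z * (2 / (cim z * cim z) * (/ (INR n + 1) + / (INR m + 1))))
      with (2 * (/ (INR n + 1) + / (INR m + 1))) by (field; pose proof (pos_INR n); pose proof (pos_INR m); repeat split; auto; lra). lra. }
  destruct (cauchy_bound ys 2 ltac:(lra) Cy) as [y Hy].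
  destruct (cauchy_bound fs _ (Rlt_le _ _ (Rdiv_lt_0_compat 2 _ ltac:(lra) Hz2)) Cf) as [f Hf].
  assert (Hg : converges_to gs (vadd y (vscal z f))).
  { apply (conv_ext (fun n => vadd (ys n) (vscal z (fs n)))).
    - intro n. unfold ys. vring.
    - apply conv_add; auto. apply conv_scal; auto. }
  assert (Gf : G f (vadd y (vscal z f))).
  { apply (G_closed G HG fs gs); auto. intro n; apply HP. }
  assert (My : y = vsub (vadd y (vscal z f)) (vscal z f)) by vring.
  exists f, (vadd y (vscal z f)). split; [exact Gf|]. rewrite <- My.
  assert (Hle : ns (vsub x y) <= d).
  { apply Rnot_lt_le. intro Hlt. set (eps := ns (vsub x y) - d).
    assert (He : 0 < eps) by (unfold eps; lra).
    destruct (small_inv (eps / 3) ltac:(lra)) as [N1 HN1].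
    set (del := Rmin 1 (eps / (3 * (2 * d + 5)))).
    assert (Hdel : 0 < del). { unfold del. apply Rmin_glb_lt; [lra|]. apply Rdiv_lt_0_compat; lra. }
    destruct (Hy del Hdel) as [N2 HN2].
    set (n := (N1 + N2)%nat).
    specialize (HN2 n ltac:(unfold n; lia)).
    pose proof (inv_le_N N1 n ltac:(unfold n; lia)).
    set (a := vsub x (ys n)). set (b := vsub (ys n) y).
    assert (Eab : vsub x y = vadd a b) by (unfold a, b; vring).
    pose proof (ns_add a b) as A. rewrite <- Eab in A.
    pose proof (re_inner_bound a b) as RB. pose proof (Rle_abs (- cre (inner a b))) as RB2. rewrite Rabs_Ropp in RB2.
    pose proof (Bys n) as Ba. fold a in Ba.
    pose proof (vnorm_sq b) as Sb. pose proof (vnorm_pos b). fold b in HN2.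
    assert (D1 : del <= 1) by apply Rmin_l. assert (D2 : del <= eps / (3 * (2 * d + 5))) by apply Rmin_r.
    assert (D3 : del * (2 * d + 5) <= eps / 3).
    { apply Rmult_le_compat_r with (r := 2 * d + 5) in D2; [|lra].
      replace (eps / (3 * (2 * d + 5)) * (2 * d + 5)) with (eps / 3) in D2 by (field; lra). exact D2. }
    pose proof (ns_pos a).
    pose proof (inv_le_N 0 n ltac:(lia)) as I1. simpl in I1. replace (0 + 1) with 1 in I1 by ring. rewrite Rinv_1 in I1.
    assert (D4 : vnorm b * vnorm b <= del) by nra.
    assert (D5 : vnorm b * (ns a + 1) <= del * (d + 2)) by nra.
    pose proof (Rle_abs (cre (inner a b))). assert (Eeps : eps = ns (vsub x y) - d) by reflexivity.
    lra. }
  set (w := vsub x y).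
  assert (Ort : forall m : H, M m -> inner w m = Czero).
  { intros m Mm.
    assert (Re0 : forall m : H, M m -> cre (inner w m) = 0).
    { intros m' Mm'. apply (quad_zero _ (ns m') (ns_pos m')). intro t.
      pose proof (dlow (vadd y (vscal (RtoC t) m')) (Mlin _ _ _ (ex_intro _ f (ex_intro _ _ (conj Gf My))) Mm')) as D.
      replace (vsub x (vadd y (vscal (RtoC t) m'))) with (vsub w (vscal (RtoC t) m')) in D by (unfold w; vring).
      rewrite ns_sub, ns_scal, re_inner_scalr in D. simpl in D. fold w in Hle. nra. }
    apply Cx_eq.
    - apply Re0; auto.
    - pose proof (Re0 (vscal (mkCx 0 1) m)) as R1.
      rewrite re_inner_scalr in R1. simpl in R1.
      assert (M (vscal (mkCx 0 1) m)).
      { replace (vscal (mkCx 0 1) m) with (vadd vzero (vscal (mkCx 0 1) m)) by vring. apply Mlin; auto. }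
      specialize (R1 H0). simpl. lra. }
  assert (Gw : G w (vscal (Cconj z) w)).
  { apply G_max; auto. intros f' k Gk.
    pose proof (Ort (vsub k (vscal z f')) (ex_intro _ f' (ex_intro _ k (conj Gk eq_refl)))) as O.
    unfold vsub in O. rewrite inner_addr, inner_oppr, inner_scalr in O.
    rewrite inner_scalr, (inner_conj w k), (inner_conj w f').
    pose proof (f_equal cre O); pose proof (f_equal cim O); simpl in *.
    apply Cx_eq; simpl; nra. }
  pose proof (G_sym G HG _ _ _ _ Gw Gw) as S.
  rewrite inner_scall, inner_scalr in S.
  pose proof (f_equal cim S) as S2. simpl in S2. rewrite inner_self_im in S2.
  assert (ns w = 0).
  { unfold ns. apply Rmult_eq_reg_l with (r := 2 * cim z); [|lra]. lra. }
  apply ns_zero in H0. unfold w in H0.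
  rewrite <- (vadd0 y), <- H0. vring.
Qed.

End R.


Section S.
Context {H : HilbertSpace}.
Implicit Types x y k d l f g h w : H.

Lemma G_resolvent (G : H -> H -> Prop) (HG : self_adjoint_graph G) (z : Cx) (Hz : cim z <> 0) :
  exists R : H -> H, (forall x, G (R x) (vadd x (vscal z (R x)))) /\
    (forall f g, G f g -> R (vsub g (vscal z f)) = f) /\ Defs.bounded R.
Proof.
  assert (Hz2 : 0 < cim z * cim z) by (apply Rsqr_pos_lt; exact Hz).
  assert (ex : forall x, exists p : H * H, G (fst p) (snd p) /\ vsub (snd p) (vscal z (fst p)) = x).
  { intro x. destruct (G_surj G HG z Hz x) as [f [g [Gfg E]]]. exists (f, g); auto. }
  set (R := fun x => fst (proj1_sig (constructive_indefinite_description _ (ex x)))).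
  assert (HR : forall x, G (R x) (snd (proj1_sig (constructive_indefinite_description _ (ex x)))) /\
     vsub (snd (proj1_sig (constructive_indefinite_description _ (ex x)))) (vscal z (R x)) = x).
  { intro x. exact (proj2_sig (constructive_indefinite_description _ (ex x))). }
  assert (inj : forall f1 g1 f2 g2, G f1 g1 -> G f2 g2 ->
            vsub g1 (vscal z f1) = vsub g2 (vscal z f2) -> f1 = f2).
  { intros f1 g1 f2 g2 G1 G2 E.
    assert (Gd : G (vsub f1 f2) (vsub g1 g2)).
    { unfold vsub. rewrite !vopp_scal. apply G_lin; auto. }
    pose proof (G_lower G HG z _ _ Gd) as Lo.
    replace (vsub (vsub g1 g2) (vscal z (vsub f1 f2))) with (vsub (vsub g1 (vscal z f1)) (vsub g2 (vscal z f2))) in Lo by vring.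
    rewrite E in Lo. replace (vsub (vsub g2 (vscal z f2)) (vsub g2 (vscal z f2))) with (@vzero H) in Lo by vring.
    rewrite ns_vzero in Lo. pose proof (ns_pos (vsub f1 f2)).
    assert (ns (vsub f1 f2) = 0) by nra. apply ns_zero in H1.
    rewrite <- (vadd0 f2), <- H1. vring. }
  exists R. split; [|split].
  - intro x. destruct (HR x) as [G1 E]. 
    replace (vadd x (vscal z (R x))) with (snd (proj1_sig (constructive_indefinite_description _ (ex x)))); [exact G1|].
    rewrite <- E at 2. vring.
  - intros f g Gfg. destruct (HR (vsub g (vscal z f))) as [G1 E]. eapply inj; eauto.
  - exists (/ Rabs (cim z)). intro x. destruct (HR x) as [G1 E].
    pose proof (G_lower G HG z _ _ G1) as Lo. rewrite E in Lo.
    assert (Pa : 0 < Rabs (cim z)) by (apply Rabs_pos_lt; exact Hz).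
    apply sq_le_le; [apply vnorm_pos| apply Rmult_le_pos; [apply Rlt_le, Rinv_0_lt_compat; exact Pa|apply vnorm_pos]|].
    rewrite vnorm_sq. 
    replace (/ Rabs (cim z) * vnorm x * (/ Rabs (cim z) * vnorm x)) with (ns x / (cim z * cim z)).
    + apply Rmult_le_reg_l with (r := cim z * cim z); [exact Hz2|].
      replace (cim z * cim z * (ns x / (cim z * cim z))) with (ns x) by (field; exact Hz). lra.
    + rewrite <- vnorm_sq.
      assert (Ez : cim z * cim z = Rabs (cim z) * Rabs (cim z)) by (rewrite <- Rabs_mult; symmetry; apply Rabs_pos_eq; nra).
      rewrite Ez. field. lra.
Qed.

Variable A : op H.
Hypothesis hA : self_adjoint A.

Lemma A_graph : self_adjoint_graph (graph_of A).
Proof. exact hA. Qed.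

Lemma A_lin a x y : dom A x -> dom A y ->
  dom A (vadd x (vscal a y)) /\ app A (vadd x (vscal a y)) = vadd (app A x) (vscal a (app A y)).
Proof.
  intros Dx Dy. assert (Gx : graph_of A x (app A x)) by (split; auto).
  assert (Gy : graph_of A y (app A y)) by (split; auto).
  destruct (G_lin _ A_graph a _ _ _ _ Gx Gy) as [D E]. split; auto.
Qed.

Lemma A_resolvent (z : Cx) : cim z <> 0 -> in_resolvent_set A z.
Proof.
  intro Hz. destruct (G_resolvent _ A_graph z Hz) as [R [R1 [R2 R3]]]. exists R. split; [|split; auto].
  - intro x. destruct (R1 x) as [D E]. split; auto. rewrite <- E. vring.
  - intros f Df. apply R2. split; auto.
Qed.

Lemma R_lin z R a x y : is_resolvent A z R -> R (vadd x (vscal a y)) = vadd (R x) (vscal a (R y)).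
Proof.
  intros [R1 [R2 _]]. destruct (R1 x) as [Dx Ex]. destruct (R1 y) as [Dy Ey].
  destruct (A_lin a _ _ Dx Dy) as [D E].
  rewrite <- (R2 _ D). f_equal. rewrite E.
  transitivity (vadd (vsub (app A (R x)) (vscal z (R x))) (vscal a (vsub (app A (R y)) (vscal z (R y))))).
  - rewrite Ex, Ey; reflexivity.
  - vring.
Qed.

Lemma R_sub z R x y : is_resolvent A z R -> R (vsub x y) = vsub (R x) (R y).
Proof.
  intro HR. replace (vsub x y) with (vadd x (vscal (Copp Cone) y)) by vring.
  rewrite (R_lin _ _ _ _ _ HR). vring.
Qed.

Lemma R_scal z R a x : is_resolvent A z R -> R (vscal a x) = vscal a (R x).
Proof.
  intro HR. replace (vscal a x) with (vadd vzero (vscal a x)) by vring.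
  rewrite (R_lin _ _ _ _ _ HR).
  assert (R0 : R vzero = vzero).
  { replace (@vzero H) with (vadd (@vzero H) (vscal (Copp Cone) (@vzero H))) at 1 by vring.
    rewrite (R_lin _ _ _ _ _ HR). vring. }
  rewrite R0. vring.
Qed.

Lemma R_cont z R (u : nat -> H) l : is_resolvent A z R -> converges_to u l ->
  converges_to (fun n => R (u n)) (R l).
Proof.
  intros HR Cu. pose proof HR as [R1 [R2 [M HM]]].
  set (M' := Rmax M 0 + 1). assert (HM' : 0 < M') by (unfold M'; pose proof (Rmax_r M 0); lra).
  intros eps He. destruct (Cu (eps / M')) as [N HN]; [apply Rdiv_lt_0_compat; lra|].
  exists N. intros n Hn. rewrite <- (R_sub _ _ _ _ HR).
  specialize (HM (vsub (u n) l)). specialize (HN n Hn). pose proof (vnorm_pos (vsub (u n) l)).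
  pose proof (Rmax_l M 0).
  apply Rmult_lt_compat_l with (r := M') in HN; [|lra].
  replace (M' * (eps / M')) with eps in HN by (field; lra).
  assert (M * vnorm (vsub (u n) l) <= M' * vnorm (vsub (u n) l)) by (apply Rmult_le_compat_r; unfold M'; lra).
  lra.
Qed.

Lemma R_unique z R1 R2 x : is_resolvent A z R1 -> is_resolvent A z R2 -> R1 x = R2 x.
Proof.
  intros [_ [P2 _]] [Q1 _]. destruct (Q1 x) as [D E]. rewrite <- E at 1. apply P2; auto.
Qed.

Lemma R_adj z R1 R2 x y : is_resolvent A z R1 -> is_resolvent A (Cconj z) R2 ->
  inner (R1 x) y = inner x (R2 y).
Proof.
  intros [P1 _] [Q1 _]. destruct (P1 x) as [Dx Ex]. destruct (Q1 y) as [Dy Ey].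
  rewrite <- Ex at 2. rewrite <- Ey at 1.
  assert (S : inner (app A (R1 x)) (R2 y) = inner (R1 x) (app A (R2 y))).
  { apply (G_sym _ A_graph); split; auto. }
  unfold vsub. rewrite inner_addr, inner_addl, inner_oppr, inner_oppl, inner_scalr, inner_scall, S.
  ceq.
Qed.

End S.


Definition Cinv (z : Cx) : Cx :=
  mkCx (cre z / (cre z * cre z + cim z * cim z)) (- cim z / (cre z * cre z + cim z * cim z)).
Definition Cdiv (z w : Cx) : Cx := Cmul z (Cinv w).

Lemma Cring : ring_theory Czero Cone Cadd Cmul Csub Copp (@eq Cx).
Proof.
  constructor; intros; try ceq; reflexivity.
Qed.

Lemma Cnorm_pos z : z <> Czero -> 0 < cre z * cre z + cim z * cim z.
Proof.
  intro Hz. destruct (Req_dec (cre z) 0); destruct (Req_dec (cim z) 0).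
  - exfalso; apply Hz; apply Cx_eq; simpl; auto.
  - nra.
  - nra.
  - nra.
Qed.

Lemma Cfield : field_theory Czero Cone Cadd Cmul Csub Copp Cdiv Cinv (@eq Cx).
Proof.
  constructor.
  - exact Cring.
  - intro E. apply (f_equal cre) in E. simpl in E. lra.
  - reflexivity.
  - intros p Hp. pose proof (Cnorm_pos p Hp). apply Cx_eq; simpl; field; lra.
Qed.

Add Field Cxfield : Cfield.




Ltac vring0 := match goal with |- ?x = ?y =>
  let T := type of x in
  let l0 := atoms x (@nil T) in let l := atoms y l0 in
  let e1 := reify x l in let e2 := reify y l in
  change (den l e1 = den l e2); apply den_eq; [reflexivity | reflexivity |
  let i := fresh "i" in let Hi := fresh "Hi" in
  intros i Hi; simpl in Hi; repeat (destruct i as [|i]; [ | try (exfalso; lia)]);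
  cbn -[Cadd Cmul Copp Cone Czero Cconj Csub RtoC Cinv] ] end.

Lemma conv_eqlim {H : HilbertSpace} (u : nat -> H) l m : converges_to u l -> l = m -> converges_to u m.
Proof. intros C ->; exact C. Qed.

Lemma op_subscal {H : HilbertSpace} (A : op H) (hA : self_adjoint A) c x y : dom A x -> dom A y ->
  dom A (vsub x (vscal c y)) /\ app A (vsub x (vscal c y)) = vsub (app A x) (vscal c (app A y)).
Proof.
  intros Dx Dy. destruct (A_lin A hA (Copp c) x y Dx Dy) as [D E].
  assert (E1 : vsub x (vscal c y) = vadd x (vscal (Copp c) y)) by vring.
  rewrite E1. split; auto. rewrite E. vring.
Qed.

Lemma bounded_comp {H : HilbertSpace} (R1 R2 : H -> H) : Defs.bounded R1 -> Defs.bounded R2 ->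
  Defs.bounded (fun x => R2 (R1 x)).
Proof.
  intros [M1 H1] [M2 H2]. exists (Rmax M2 0 * Rmax M1 0). intro x.
  pose proof (Rmax_l M1 0). pose proof (Rmax_r M1 0). pose proof (Rmax_l M2 0). pose proof (Rmax_r M2 0).
  pose proof (vnorm_pos x). pose proof (vnorm_pos (R1 x)).
  specialize (H1 x). specialize (H2 (R1 x)).
  assert (vnorm (R1 x) <= Rmax M1 0 * vnorm x) by nra.
  assert (vnorm (R2 (R1 x)) <= Rmax M2 0 * vnorm (R1 x)) by nra.
  nra.
Qed.


Theorem mainTheorem7 (H : HilbertSpace) (q s : Cx) (a b : R) (A B : op H)
  (hq : Cmod q = 1) (hq2 : Cmul q q <> Cone)
  (hA : self_adjoint A) (hB : self_adjoint B)
  (hab : a * b <> 0) (hs : Cmul s s = q)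
  (hT : ess_self_adjoint (T_op q s a b A B)) :
  let lam := Cmul (RtoC a) (Cconj s) in
  let mu := Cmul (RtoC b) (Cconj s) in
  in_resolvent_set A lam /\ in_resolvent_set A (Cmul lam q) /\
  in_resolvent_set B mu /\ in_resolvent_set B (Cmul mu q) /\
  in_resolvent_set A (Cmul (RtoC a) s) /\ in_resolvent_set B (Cmul (RtoC b) s) /\
  (forall RA1 RAq RB1 RBq : H -> H,
     is_resolvent A lam RA1 -> is_resolvent A (Cmul lam q) RAq ->
     is_resolvent B mu RB1 -> is_resolvent B (Cmul mu q) RBq ->
     let c := Cmul (Cmul (Cmul mu lam) q) (Csub q Cone) in
     (forall x, RA1 (RB1 x) =
        vadd (vscal q (RBq (RAq x))) (vscal c (RBq (RAq (RA1 (RB1 x)))))) /\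
     (forall x, RA1 (RB1 x) =
        vadd (vscal q (RBq (RAq x))) (vscal c (RA1 (RB1 (RBq (RAq x))))))) /\
  (forall RAs RBs : H -> H,
     is_resolvent A (Cmul (RtoC a) s) RAs -> is_resolvent B (Cmul (RtoC b) s) RBs ->
     normal_bdd (fun x => RBs (RAs x))).
Proof.
  intros lam mu.
  assert (hs1 : cre s * cre s + cim s * cim s = 1).
  { subst q. unfold Cmod in hq. simpl in hq.
    set (X := (cre s * cre s - cim s * cim s) * (cre s * cre s - cim s * cim s) +
              (cre s * cim s + cim s * cre s) * (cre s * cim s + cim s * cre s)) in hq.
    assert (X0 : 0 <= X) by (unfold X; nra).
    assert (X1 : X = 1) by (rewrite <- (sqrt_sqrt X X0), hq; ring).
    unfold X in X1. nra. }
  assert (hsi : cim s <> 0).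
  { intro E. apply hq2. subst q. rewrite E in hs1. apply Cx_eq; simpl; rewrite E; nra. }
  assert (hsnz : s <> Czero). { intro E; rewrite E in hs1; simpl in hs1; lra. }
  assert (hconj : Cconj s = Cinv s).
  { apply Cx_eq; unfold Cinv; simpl; rewrite hs1; field. }
  assert (ha : a <> 0) by (intro E; apply hab; rewrite E; ring).
  assert (hb : b <> 0) by (intro E; apply hab; rewrite E; ring).
  assert (h2 : Cadd Cone Cone <> Czero) by (intro E; apply (f_equal cre) in E; simpl in E; lra).
  assert (Ehalf : RtoC (/2) = Cinv (Cadd Cone Cone)) by (apply Cx_eq; unfold Cinv; simpl; field).
  assert (Eab : RtoC (a * b) = Cmul (RtoC a) (RtoC b)) by ceq.
  subst q. subst lam mu.
  assert (Kl : Cmul (Cmul (RtoC a) (Cconj s)) (Cmul s s) = Cmul (RtoC a) s).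
  { rewrite hconj. field. auto. }
  assert (Km : Cmul (Cmul (RtoC b) (Cconj s)) (Cmul s s) = Cmul (RtoC b) s).
  { rewrite hconj. field. auto. }
  assert (nzim : forall r, r <> 0 -> cim (Cmul (RtoC r) (Cconj s)) <> 0 /\ cim (Cmul (RtoC r) s) <> 0).
  { intros r hr. simpl. split; intro E.
    - assert (r * cim s = 0) by lra. apply Rmult_integral in H0 as [|]; auto.
    - assert (r * cim s = 0) by lra. apply Rmult_integral in H0 as [|]; auto. }
  destruct (nzim a ha) as [Ia1 Ia2]. destruct (nzim b hb) as [Ib1 Ib2].
  destruct (A_resolvent A hA _ Ia1) as [RA1 HA1].
  destruct (A_resolvent A hA _ Ia2) as [RAq HAq].
  destruct (A_resolvent B hB _ Ib1) as [RB1 HB1].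
  destruct (A_resolvent B hB _ Ib2) as [RBq HBq].
  set (T := T_op (Cmul s s) s a b A B) in *.
  set (z1 := Cmul (Cmul (RtoC (/ 2)) (Csub (Cconj s) s)) (RtoC (a * b))).
  set (z2 := Copp z1).
  assert (Iz1 : cim z1 <> 0).
  { assert (E : cim z1 = - cim s * (a * b)) by (unfold z1; simpl; field).
    rewrite E. intro E0. assert (cim s * (a * b) = 0) by lra. apply Rmult_integral in H0 as [|]; auto. }
  assert (Iz2 : cim z2 <> 0) by (change (- cim z1 <> 0); intro E; apply Iz1; lra).
  assert (Dense : forall z, cim z <> 0 -> forall x, exists u : nat -> H,
            (forall n, Dq (Cmul s s) A B (u n)) /\
            converges_to (fun n => vsub (app T (u n)) (vscal z (u n))) x).
  { intros z Hz x. destruct (G_resolvent _ hT z Hz) as [Rc [Rc1 _]].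
    destruct (Rc1 x) as [u [Du [Cu CTu]]]. exists u. split; [exact Du|].
    apply (conv_ext (fun n => vadd (app T (u n)) (vscal (Copp z) (u n)))); [intro n; vring|].
    eapply conv_eqlim; [apply conv_add; [exact CTu| apply conv_scal; exact Cu]|]. vring. }
  set (c := Cmul (Cmul (Cmul (Cmul (RtoC b) (Cconj s)) (Cmul (RtoC a) (Cconj s))) (Cmul s s))
              (Csub (Cmul s s) Cone)).
  assert (Ids : forall RA1 RAq RB1 RBq,
     is_resolvent A (Cmul (RtoC a) (Cconj s)) RA1 ->
     is_resolvent A (Cmul (Cmul (RtoC a) (Cconj s)) (Cmul s s)) RAq ->
     is_resolvent B (Cmul (RtoC b) (Cconj s)) RB1 ->
     is_resolvent B (Cmul (Cmul (RtoC b) (Cconj s)) (Cmul s s)) RBq ->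
     (forall x, RA1 (RB1 x) =
        vadd (vscal (Cmul s s) (RBq (RAq x))) (vscal c (RBq (RAq (RA1 (RB1 x)))))) /\
     (forall x, RA1 (RB1 x) =
        vadd (vscal (Cmul s s) (RBq (RAq x))) (vscal c (RA1 (RB1 (RBq (RAq x))))))).
  { clear RA1 HA1 RAq HAq RB1 HB1 RBq HBq.
    intros RA1 RAq RB1 RBq HA1 HAq HB1 HBq.
    set (lam := Cmul (RtoC a) (Cconj s)) in *. set (mu := Cmul (RtoC b) (Cconj s)) in *.
    assert (Alg : forall f, Dq (Cmul s s) A B f ->
      let g := vsub (app B (vsub (app A f) (vscal lam f))) (vscal mu (vsub (app A f) (vscal lam f))) in
      let hh := vsub (app A (vsub (app B f) (vscal (Cmul mu (Cmul s s)) f)))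
                  (vscal (Cmul lam (Cmul s s)) (vsub (app B f) (vscal (Cmul mu (Cmul s s)) f))) in
      RA1 (RB1 g) = f /\ RBq (RAq hh) = f /\ hh = vadd (vscal (Cmul s s) g) (vscal c f) /\
      vscal (Cconj s) (vsub (app T f) (vscal z2 f)) = g /\ vscal s (vsub (app T f) (vscal z1 f)) = hh).
    { intros f [DAf [DBAf [DBf [DABf Ecomm]]]] g hh.
      destruct (op_subscal B hB lam (app A f) f DBAf DBf) as [LB1d LB1].
      destruct (op_subscal A hA (Cmul mu (Cmul s s)) (app B f) f DABf DAf) as [LA1d LA1].
      destruct (op_subscal A hA (Cmul (RtoC b) s) (app B f) f DABf DAf) as [LA2d LA2].
      split; [|split; [|split; [|split]]].
      - unfold g. destruct HB1 as [_ [HB12 _]]. rewrite (HB12 _ LB1d).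
        destruct HA1 as [_ [HA12 _]]. apply HA12; exact DAf.
      - unfold hh. destruct HAq as [_ [HAq2 _]]. rewrite (HAq2 _ LA1d).
        destruct HBq as [_ [HBq2 _]]. apply HBq2; exact DBf.
      - unfold hh, g. rewrite LA1, LB1, Ecomm. unfold c, lam, mu. vring0.
        all: rewrite ?hconj; field; auto.
      - unfold g. unfold T, T_op. cbn [app]. rewrite LA2, LB1, Ecomm. unfold z2, z1, lam, mu.
        vring0. all: rewrite ?hconj, ?Ehalf, ?Eab; field; auto.
      - unfold hh. unfold T, T_op. cbn [app]. rewrite LA2, LA1, Ecomm. unfold z1, lam, mu.
        vring0. all: rewrite ?hconj, ?Ehalf, ?Eab; field; auto. }
    assert (CF1 : forall (u : nat -> H) x, converges_to u x ->
              converges_to (fun n => RA1 (RB1 (u n))) (RA1 (RB1 x))).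
    { intros u x Cu. apply (R_cont A hA _ _ _ _ HA1). apply (R_cont B hB _ _ _ _ HB1). exact Cu. }
    assert (CN : forall (u : nat -> H) x, converges_to u x ->
              converges_to (fun n => RBq (RAq (u n))) (RBq (RAq x))).
    { intros u x Cu. apply (R_cont B hB _ _ _ _ HBq). apply (R_cont A hA _ _ _ _ HAq). exact Cu. }
    split.
    - intro x. destruct (Dense z2 Iz2 (vscal s x)) as [u [Du Cu]].
      set (gs := fun n => vscal (Cconj s) (vsub (app T (u n)) (vscal z2 (u n)))).
      assert (Cg : converges_to gs x).
      { eapply conv_eqlim; [apply conv_scal; exact Cu|]. vring0. rewrite hconj; field; auto. }
      assert (Eq : forall n, RA1 (RB1 (gs n)) =
         vadd (vscal (Cmul s s) (RBq (RAq (gs n)))) (vscal c (RBq (RAq (RA1 (RB1 (gs n))))))).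
      { intro n. destruct (Alg (u n) (Du n)) as [E1 [E2 [E3 [E4 _]]]].
        unfold gs. rewrite E4, E1. rewrite E3 in E2.
        rewrite (R_lin A hA _ _ _ _ _ HAq), (R_scal A hA _ _ _ _ HAq) in E2.
        rewrite (R_lin B hB _ _ _ _ _ HBq), (R_scal B hB _ _ _ _ HBq) in E2.
        rewrite E2 at 1. reflexivity. }
      apply (conv_unique (fun n => RA1 (RB1 (gs n)))); [apply CF1; exact Cg|].
      apply (conv_ext _ _ _ (fun n => eq_sym (Eq n))).
      apply conv_add; apply conv_scal; [apply CN; exact Cg|]. apply CN, CF1, Cg.
    - intro x. destruct (Dense z1 Iz1 (vscal (Cconj s) x)) as [u [Du Cu]].
      set (gs := fun n => vscal s (vsub (app T (u n)) (vscal z1 (u n)))).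
      assert (Cg : converges_to gs x).
      { eapply conv_eqlim; [apply conv_scal; exact Cu|]. vring0. rewrite hconj; field; auto. }
      assert (Eq : forall n, RA1 (RB1 (gs n)) =
         vadd (vscal (Cmul s s) (RBq (RAq (gs n)))) (vscal c (RA1 (RB1 (RBq (RAq (gs n))))))).
      { intro n. destruct (Alg (u n) (Du n)) as [E1 [E2 [E3 [_ E5]]]].
        unfold gs. rewrite E5, E2, E3.
        rewrite (R_lin B hB _ _ _ _ _ HB1), (R_scal B hB _ _ _ _ HB1).
        rewrite (R_lin A hA _ _ _ _ _ HA1), (R_scal A hA _ _ _ _ HA1).
        rewrite E1. reflexivity. }
      apply (conv_unique (fun n => RA1 (RB1 (gs n)))); [apply CF1; exact Cg|].
      apply (conv_ext _ _ _ (fun n => eq_sym (Eq n))).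
      apply conv_add; apply conv_scal; [apply CN; exact Cg|]. apply CF1, CN, Cg. }
  split; [exists RA1; exact HA1|]. split; [exists RAq; rewrite Kl; exact HAq|].
  split; [exists RB1; exact HB1|]. split; [exists RBq; rewrite Km; exact HBq|].
  split; [exists RAq; exact HAq|]. split; [exists RBq; exact HBq|].
  split.
  - intros RA1' RAq' RB1' RBq' H1 H2 H3 H4 c'. exact (Ids RA1' RAq' RB1' RBq' H1 H2 H3 H4).
  - intros RAs RBs HAs HBs.
    rewrite <- Kl in HAq. rewrite <- Km in HBq.
    destruct (Ids RA1 RAq RB1 RBq HA1 HAq HB1 HBq) as [Id1 Id2].
    assert (EN : forall x, RBs (RAs x) = RBq (RAq x)).
    { intro x. rewrite Kl in HAq. rewrite Km in HBq.
      rewrite (R_unique A _ _ _ x HAs HAq). apply (R_unique B _ _ _ _ HBs HBq). }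
    split; [apply bounded_comp; [apply HAs|apply HBs]|].
    exists (fun x => RA1 (RB1 x)). split.
    + intros x y. cbn beta.
      assert (cB : Cconj (Cmul (RtoC b) s) = Cmul (RtoC b) (Cconj s)) by ceq.
      assert (cA : Cconj (Cmul (RtoC a) s) = Cmul (RtoC a) (Cconj s)) by ceq.
      rewrite <- cB in HB1. rewrite <- cA in HA1.
      rewrite (R_adj B hB _ _ _ _ _ HBs HB1). apply (R_adj A hA _ _ _ _ _ HAs HA1).
    + intro x. cbn beta. rewrite EN, EN.
      assert (cnz : c <> Czero).
      { assert (Ec : c = Cmul (Cmul (RtoC a) (RtoC b)) (Csub (Cmul s s) Cone)).
        { unfold c. rewrite hconj. field. auto. }
        rewrite Ec. intro E.
        assert (Hab0 : Cmul (RtoC a) (RtoC b) <> Czero).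
        { intro E0. apply (f_equal cre) in E0. simpl in E0. apply hab. lra. }
        assert (E1 : Csub (Cmul s s) Cone = Czero).
        { transitivity (Cmul (Cinv (Cmul (RtoC a) (RtoC b))) (Cmul (Cmul (RtoC a) (RtoC b)) (Csub (Cmul s s) Cone))).
          - field. split; intro E0; apply (f_equal cre) in E0; simpl in E0; auto.
          - rewrite E. field. split; intro E0; apply (f_equal cre) in E0; simpl in E0; auto. }
        apply hq2. assert (E2 : Cmul s s = Cone).
        { transitivity (Cadd (Csub (Cmul s s) Cone) Cone); [ring|]. rewrite E1. ring. }
        rewrite E2. ring. }
      pose proof (Id1 x) as E1. pose proof (Id2 x) as E2. rewrite E1 in E2 at 1.
      apply vadd_cancel in E2.
      apply (f_equal (vscal (Cinv c))) in E2. rewrite !vscalA in E2.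
      replace (Cmul (Cinv c) c) with Cone in E2 by (field; exact cnz).
      rewrite !vscal1 in E2. exact E2.
Qed.
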